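(* Let $\rho$ be a two-qubit state on $\mathbb{C}^2\otimes\mathbb{C}^2$ whose correlation matrix $T$ is diagonal, and write $\lambda_i=T_{ii}$ for $i=0,1,2$. Then $$d_{\max}(\rho)=\frac{1}{\sqrt2}\sqrt{\sum_{i=0}^{2}\lambda_i^2(1-n_i^2)},$$ where $\vec n=(n_0,n_1,n_2)^T$ is the unit vector defined as follows: if $\rho_B\neq I/2$, then $\vec n=\vec r^B/\|\vec r^B\|$; if $\rho_B=I/2$, then $n_i=1$ (and $n_j=0$ for $j\neq i$) for an index $i$ with $|\lambda_i|=\min_k|\lambda_k|$.
   Context: Let $\sigma_0,\sigma_1,\sigma_2$ be the Pauli matrices $X,Y,Z$. Every two-qubit state can be written as $\rho=\frac14\big(I\otimes I+\sum_i r^A_i\sigma_i\otimes I+\sum_j r^B_j I\otimes\sigma_j+\sum_{i,j}T_{ij}\sigma_i\otimes\sigma_j\big)$, with Bloch vectors $r^A_i=\mathrm{Tr}(\sigma_i\rho_A)$, $r^B_j=\mathrm{Tr}(\sigma_j\rho_B)$ (where $\rho_A=\mathrm{Tr}_B\rho$, $\rho_B=\mathrm{Tr}_A\rho$) and real correlation matrix $T_{ij}=\mathrm{Tr}((\sigma_i\otimes\sigma_j)\rho)$. A unitary $U^B$ on $\mathbb{C}^2$ is called cyclic for $\rho$ if $[\rho_B,U^B]=0$. Set $\rho_f=(I\otimes U^B)\rho(I\otimes U^{B\dagger})$, define the Fu distance $d(\rho,U^B)=\frac{1}{\sqrt2}\|\rho-\rho_f\|_F$ (Frobenius norm), and $d_{\max}(\rho)=\max\{d(\rho,U^B):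 U^B\text{ unitary},\ [\rho_B,U^B]=0\}$. *)

(* Defs.v *)
From HB Require Import structures.
From mathcomp Require Import all_boot all_order all_algebra.
From mathcomp Require Import spectral.
From mathcomp Require Import complex mxtens.
From mathcomp Require Import reals.
Set Implicit Arguments. Unset Strict Implicit. Unset Printing Implicit Defensive.
Import Order.TTheory GRing.Theory Num.Theory.
Local Open Scope ring_scope.
Local Open Scope sesquilinear_scope.

Section TwoQubit.
Variable R : rcfType.
Local Notation C := (R[i]).

(* Pauli matrices sigma_0 = X, sigma_1 = Y, sigma_2 = Z *)
Definition pauli (k : 'I_3) : 'M[C]_2 :=
  \matrix_(a < 2, b < 2)
    match nat_of_ord k with
    | 0 => if a != b then 1 else 0
    | 1 => if a == b then 0 else if nat_of_ord a == 0%N then - 'i%C else 'i%C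
    | _ => if a == b then (if nat_of_ord a == 0%N then 1 else -1) else 0
    end.

Definition is_state (rho : 'M[C]_(2 * 2)) : Prop :=
  [/\ rho ^t* = rho,
      forall v : 'cV[C]_(2 * 2), 0 <= (v ^t* *m rho *m v) 0 0
    & \tr rho = 1].

(* partial traces; basis index of |a>|b> is mxtens_index (a, b) *)
Definition ptraceB (rho : 'M[C]_(2 * 2)) : 'M[C]_2 :=  (* rho_A = Tr_B rho *)
  \matrix_(a < 2, a' < 2) \sum_(b < 2) rho (mxtens_index (a, b)) (mxtens_index (a', b)).
Definition ptraceA (rho : 'M[C]_(2 * 2)) : 'M[C]_2 :=  (* rho_B = Tr_A rho *)
  \matrix_(b < 2, b' < 2) \sum_(a < 2) rho (mxtens_index (a, b)) (mxtens_index (a, b')).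

Definition blochB (rho : 'M[C]_(2 * 2)) (j : 'I_3) : R :=
  complex.Re (\tr (pauli j *m ptraceA rho)).

Definition corr (rho : 'M[C]_(2 * 2)) (i j : 'I_3) : R :=
  complex.Re (\tr ((pauli i *t pauli j) *m rho)).

Definition frob (m n : nat) (A : 'M[C]_(m, n)) : R :=
  Num.sqrt (\sum_(i < m) \sum_(j < n) complex.Re (A i j * (A i j)^*%C)).

Definition rho_f (rho : 'M[C]_(2 * 2)) (U : 'M[C]_2) : 'M[C]_(2 * 2) :=
  ((1%:M : 'M[C]_2) *t U) *m rho *m ((1%:M : 'M[C]_2) *t U) ^t*.

Definition fu_dist (rho : 'M[C]_(2 * 2)) (U : 'M[C]_2) : R :=
  (Num.sqrt 2)^-1 * frob (rho - rho_f rho U).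

Definition cyclic_unitary (rho : 'M[C]_(2 * 2)) (U : 'M[C]_2) : Prop :=
  U \is unitarymx /\ ptraceA rho *m U = U *m ptraceA rho.

Definition is_dmax (rho : 'M[C]_(2 * 2)) (v : R) : Prop :=
  (exists U, cyclic_unitary rho U /\ fu_dist rho U = v) /\
  (forall U, cyclic_unitary rho U -> fu_dist rho U <= v).

Definition dmax_formula (rho : 'M[C]_(2 * 2)) (n : 'I_3 -> R) : R :=
  (Num.sqrt 2)^-1 *
  Num.sqrt (\sum_(i < 3) corr rho i i ^+ 2 * (1 - n i ^+ 2)).

Definition blochB_norm (rho : 'M[C]_(2 * 2)) : R :=
  Num.sqrt (\sum_(j < 3) blochB rho j ^+ 2).

End TwoQubit.

(* Main.v *)
Require Import Defs.
From HB Require Import structures.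
From mathcomp Require Import all_boot all_order all_algebra.
From mathcomp Require Import spectral.
From mathcomp Require Import complex mxtens.
From mathcomp Require Import reals.
From mathcomp Require Import ring lra.
Import Order.TTheory GRing.Theory Num.Theory.
Local Open Scope ring_scope.

Set Implicit Arguments. Unset Strict Implicit. Unset Printing Implicit Defensive.
Local Open Scope sesquilinear_scope.
Definition o0 : 'I_2 := @Ordinal 2 0 isT.
Definition o1 : 'I_2 := @Ordinal 2 1 isT.
Definition k0 : 'I_3 := @Ordinal 3 0 isT.
Definition k1 : 'I_3 := @Ordinal 3 1 isT.
Definition k2 : 'I_3 := @Ordinal 3 2 isT.
Lemma sum2 (V : nmodType) (F : 'I_2 -> V) : \sum_(i < 2) F i = F o0 + F o1.
Proof. by rewrite big_ord_recr /= big_ord_recr /= big_ord0 add0r; congr (F _ + F _); apply: val_inj. Qed.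
Lemma sum3 (V : nmodType) (F : 'I_3 -> V) : \sum_(i < 3) F i = F k0 + F k1 + F k2.
Proof. by rewrite !big_ord_recr /= big_ord0 add0r; congr (F _ + F _ + F _); apply: val_inj. Qed.
Lemma ord2P (i : 'I_2) : i = o0 \/ i = o1.
Proof. by case: i => [[|[|m]] Hm]; [left|right|]; try apply: val_inj. Qed.
Lemma ord3P (i : 'I_3) : [\/ i = k0, i = k1 | i = k2].
Proof. by case: i => [[|[|[|m]]] Hm]; [constructor 1|constructor 2|constructor 3|]; try apply: val_inj. Qed.
Lemma conjCE (R : rcfType) (x : R[i]) : x^*%R = x^*%C.
Proof.
case: x => a b.
have -> : (a +i* b)%C = (a%:C + 'i * b%:C)%C by simpc.
rewrite rmorphD rmorphM /= conjCi !conj_Creal ?complex_real //. simpc. by [].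
Qed.
Lemma sum_tens (V : nmodType) m n (F : 'I_(m * n) -> V) :
  \sum_(k < m * n) F k = \sum_(a < m) \sum_(b < n) F (mxtens_index (a, b)).
Proof.
rewrite pair_big /=.
rewrite (reindex (@mxtens_index m n)) /=.
  by apply: eq_bigr => -[a b].
by exists (@mxtens_unindex m n) => k _; rewrite (mxtens_indexK, mxtens_unindexK).
Qed.
Definition f2 (R : rcfType) m n (A : 'M[R[i]]_(m, n)) : R :=
  \sum_(i < m) \sum_(j < n) complex.Re (A i j * (A i j)^*%C).
Definition blk (R : rcfType) (M : 'M[R[i]]_(2 * 2)) (a a' : 'I_2) : 'M[R[i]]_2 :=
  \matrix_(b < 2, b' < 2) M (mxtens_index (a, b)) (mxtens_index (a', b')).
Lemma f2_blk (R : rcfType) (M : 'M[R[i]]_(2 * 2)) :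
  f2 M = f2 (blk M o0 o0) + f2 (blk M o0 o1) + f2 (blk M o1 o0) + f2 (blk M o1 o1).
Proof.
rewrite /f2 sum_tens !sum2 !sum_tens !sum2.
rewrite !mxE. ring.
Qed.

Lemma blk_rhof (R : rcfType) (rho : 'M[R[i]]_(2 * 2)) U a a' :
  blk (rho_f rho U) a a' = U *m blk rho a a' *m U ^t*.
Proof.
apply/matrixP => b b'; rewrite /rho_f !mxE !sum_tens !sum2 !mxE !sum2 !mxE !sum_tens !sum2 !mxE !mxtens_indexK /=.
case: (ord2P a) => ->; case: (ord2P a') => -> /=; rewrite ?mulr1n ?mulr0n ?rmorphM ?rmorphD ?conjC0 ?conjC1 /=; ring.
Qed.
Lemma ptraceA_blk (R : rcfType) (rho : 'M[R[i]]_(2 * 2)) :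
  ptraceA rho = blk rho o0 o0 + blk rho o1 o1.
Proof. by apply/matrixP => b b'; rewrite !(mxE, sum2). Qed.
Definition T (R : rcfType) k (X : 'M[R[i]]_2) := \tr (pauli R k *m X).
Lemma corr_blk (R : rcfType) (rho : 'M[R[i]]_(2 * 2)) i j :
  corr rho i j = complex.Re (pauli R i o0 o0 * T j (blk rho o0 o0)
    + pauli R i o0 o1 * T j (blk rho o1 o0) + pauli R i o1 o0 * T j (blk rho o0 o1)
    + pauli R i o1 o1 * T j (blk rho o1 o1)).
Proof.
rewrite /corr /T /mxtrace !(sum_tens, sum2, mxE, mxtens_indexK) /=.
congr complex.Re; ring.
Qed.
Lemma tr_blk (R : rcfType) (rho : 'M[R[i]]_(2 * 2)) :
  \tr rho = \tr (blk rho o0 o0) + \tr (blk rho o1 o1).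
Proof. by rewrite /mxtrace !(sum_tens, sum2, mxE). Qed.
Lemma blochB_blk (R : rcfType) (rho : 'M[R[i]]_(2 * 2)) j :
  blochB rho j = complex.Re (T j (blk rho o0 o0) + T j (blk rho o1 o1)).
Proof. by rewrite /blochB ptraceA_blk /T mulmxDr mxtraceD. Qed.
Lemma pauli_herm (R : rcfType) k b b' : pauli R k b b' = (pauli R k b' b)^*%R.
Proof.
case: (ord3P k) => ->; case: (ord2P b) => ->; case: (ord2P b') => ->;
rewrite !mxE /= ?conjC0 ?conjC1 ?rmorphN /= ?conjCi ?conjC1 ?opprK //.
Qed.
Lemma blkE (R : rcfType) (M : 'M[R[i]]_(2 * 2)) a a' b b' :
  blk M a a' b b' = M (mxtens_index (a, b)) (mxtens_index (a', b')).
Proof. by rewrite mxE. Qed.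
Lemma Texp (R : rcfType) k (X : 'M[R[i]]_2) :
  T k X = pauli R k o0 o0 * X o0 o0 + pauli R k o0 o1 * X o1 o0
        + pauli R k o1 o0 * X o0 o1 + pauli R k o1 o1 * X o1 o1.
Proof. rewrite /T; move: (pauli R k) => P; rewrite /mxtrace !(sum2, mxE); ring. Qed.
Lemma T_herm (R : rcfType) (rho : 'M[R[i]]_(2 * 2)) k a a' :
  rho ^t* = rho -> T k (blk rho a' a) = (T k (blk rho a a'))^*%R.
Proof.
move=> H.
have E : forall x y, rho x y = (rho y x)^*%R.
  by move=> x y; rewrite -{1}H !mxE.
rewrite !Texp !rmorphD !rmorphM /= !blkE.
have PC : forall b b', (pauli R k b b')^*%R = pauli R k b' b.
  by move=> b b'; rewrite [pauli R k b' b]pauli_herm.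
rewrite !PC -!E; ring.
Qed.

Definition D (R : rcfType) (U : 'M[R[i]]_2) k := pauli R k - U *m pauli R k *m U ^t*.
Lemma one_c (R : rcfType) : (1 : R[i]) = (1 +i* 0)%C. Proof. by []. Qed.
Lemma zero_c (R : rcfType) : (0 : R[i]) = (0 +i* 0)%C. Proof. by []. Qed.
Lemma pexp (R : rcfType) (X : 'M[R[i]]_2) :
  X *+ 2 = \tr X *: 1%:M + T k0 X *: pauli R k0 + T k1 X *: pauli R k1 + T k2 X *: pauli R k2.
Proof.
rewrite !Texp.
apply/matrixP => i j; case: (ord2P i) => ->; case: (ord2P j) => ->;
rewrite /mxtrace !(mxE, sum2) /= ?mulr1n ?mulr0n.
all: move: (X o0 o0) (X o0 o1) (X o1 o0) (X o1 o1) => [a1 b1] [a2 b2] [a3 b3] [a4 b4].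
all: rewrite ?one_c ?zero_c; simpc.
all: apply/eqP; rewrite eq_complex /=; apply/andP; split; apply/eqP; ring.
Qed.
Lemma exp_id (R : rcfType) (U X : 'M[R[i]]_2) :
  U *m U ^t* = 1%:M ->
  (X - U *m X *m U ^t*) *+ 2 = T k0 X *: D U k0 + T k1 X *: D U k1 + T k2 X *: D U k2.
Proof.
move=> HU.
have -> : (X - U *m X *m U ^t*) *+ 2 = X *+ 2 - U *m (X *+ 2) *m U ^t*.
  by rewrite mulrnBl !mulr2n mulmxDr mulmxDl.
rewrite pexp /D !mulmxDr !mulmxDl -!scalemxAr -!scalemxAl mulmx1 HU.
move: (pauli R k0) (pauli R k1) (pauli R k2) (U *m pauli R k0 *m U ^t*) (U *m pauli R k1 *m U ^t*) (U *m pauli R k2 *m U ^t*) => P0 P1 P2 W0 W1 W2.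
apply/matrixP => i j; rewrite !mxE; ring.
Qed.

Lemma ReD (R : rcfType) (x y : R[i]) : complex.Re (x + y) = complex.Re x + complex.Re y.
Proof. by case: x; case: y. Qed.
Lemma ReN (R : rcfType) (x : R[i]) : complex.Re (- x) = - complex.Re x.
Proof. by case: x. Qed.
Lemma ReB (R : rcfType) (x y : R[i]) : complex.Re (x - y) = complex.Re x - complex.Re y.
Proof. by rewrite ReD ReN. Qed.
Lemma Re_sum (R : rcfType) n (F : 'I_n -> R[i]) :
  complex.Re (\sum_(i < n) F i) = \sum_(i < n) complex.Re (F i).
Proof.
elim: n F => [|n IH] F; first by rewrite !big_ord0.
by rewrite !big_ord_recr /= ReD IH.
Qed.
Lemma f2_tr (R : rcfType) n (M : 'M[R[i]]_n) : f2 M = complex.Re (\tr (M *m M ^t*)).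
Proof.
rewrite /f2 /mxtrace Re_sum; apply: eq_bigr => i _.
rewrite !mxE Re_sum; apply: eq_bigr => j _.
by rewrite !mxE conjCE.
Qed.
Lemma adjM (R : rcfType) (A B : 'M[R[i]]_2) : (A *m B) ^t* = B ^t* *m A ^t*.
Proof. by rewrite trmx_mul map_mxM. Qed.
Lemma adjB (R : rcfType) (A B : 'M[R[i]]_2) : (A - B) ^t* = A ^t* - B ^t*.
Proof. by apply/matrixP => i j; rewrite !mxE rmorphB. Qed.
Lemma pauli_adj (R : rcfType) k : (pauli R k) ^t* = pauli R k.
Proof. by apply/matrixP => i j; rewrite [RHS]pauli_herm !mxE. Qed.
Lemma iiE (R : rcfType) : ('i%C * 'i%C : R[i]) = -1.
Proof. by rewrite -expr2 sqr_i. Qed.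
Lemma tr_pp (R : rcfType) k : \tr (pauli R k *m pauli R k) = 2.
Proof.
case: (ord3P k) => ->; rewrite /mxtrace !(sum2, mxE) /=; rewrite ?mulr0 ?mul0r ?addr0 ?add0r ?mulr1 ?mul1r;
rewrite ?iiE ?mulrNN ?mulNr ?mulrN ?iiE ?opprK ?mulr1 //.
Qed.
Lemma f2_D (R : rcfType) (U : 'M[R[i]]_2) k :
  U *m U ^t* = 1%:M -> U ^t* *m U = 1%:M ->
  f2 (D U k) = 4 - 2 * complex.Re (\tr (pauli R k *m (U *m pauli R k *m U ^t*))).
Proof.
move=> HU HU'.
have Dh : (D U k) ^t* = D U k.
  by rewrite /D adjB !adjM pauli_adj trmxCK mulmxA.
rewrite f2_tr Dh /D.
have WW : \tr ((U *m pauli R k *m U ^t*) *m (U *m pauli R k *m U ^t*)) = 2.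
  rewrite -!mulmxA [U ^t* *m _]mulmxA HU' mul1mx mxtrace_mulC -!mulmxA HU' mulmx1 tr_pp //.
have WP : \tr ((U *m pauli R k *m U ^t*) *m pauli R k) = \tr (pauli R k *m (U *m pauli R k *m U ^t*)).
  by rewrite mxtrace_mulC.
rewrite mulmxBl !mulmxBr !linearB /= WW WP tr_pp.
move: (\tr _) => z; case: z => a b /=.
rewrite /=. ring.
Qed.

Definition sq (R : rcfType) (z : R[i]) : R := complex.Re (z * z^*%C).
Definition V1 (R : rcfType) (U : 'M[R[i]]_2) := U o0 o1 + U o1 o0.
Definition V2 (R : rcfType) (U : 'M[R[i]]_2) := 'i%C * (U o0 o1 - U o1 o0).
Definition V3 (R : rcfType) (U : 'M[R[i]]_2) := U o0 o0 - U o1 o1.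
Lemma unit_entries (R : rcfType) (U : 'M[R[i]]_2) : U *m U ^t* = 1%:M ->
  sq (U o0 o0) + sq (U o0 o1) = 1 /\ sq (U o1 o0) + sq (U o1 o1) = 1.
Proof.
move=> HU.
have h1 := congr1 (fun M : 'M[R[i]]_2 => M o0 o0) HU; have h2 := congr1 (fun M : 'M[R[i]]_2 => M o1 o1) HU.
move: h1 h2; rewrite !(mxE, sum2) /= !conjCE /sq => h1 h2.
by split; rewrite -ReD ?h1 ?h2.
Qed.
Lemma f2_D0 (R : rcfType) (U : 'M[R[i]]_2) :
  U *m U ^t* = 1%:M -> U ^t* *m U = 1%:M -> f2 (D U k0) = 2 * (sq (V2 U) + sq (V3 U)).
Proof.
move=> HU HU'; have [h1 h2] := unit_entries HU.
rewrite f2_D // /V2 /V3.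
move: h1 h2; rewrite /sq /mxtrace !(mxE, sum2) /= !conjCE.
move: (U o0 o0) (U o0 o1) (U o1 o0) (U o1 o1) => [a1 b1] [a2 b2] [a3 b3] [a4 b4].
rewrite ?one_c ?zero_c; simpc; rewrite /= => h1 h2.
nra.
Qed.
Lemma f2_D1 (R : rcfType) (U : 'M[R[i]]_2) :
  U *m U ^t* = 1%:M -> U ^t* *m U = 1%:M -> f2 (D U k1) = 2 * (sq (V1 U) + sq (V3 U)).
Proof.
move=> HU HU'; have [h1 h2] := unit_entries HU.
rewrite f2_D // /V1 /V3.
move: h1 h2; rewrite /sq /mxtrace !(mxE, sum2) /= !conjCE.
move: (U o0 o0) (U o0 o1) (U o1 o0) (U o1 o1) => [a1 b1] [a2 b2] [a3 b3] [a4 b4].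
rewrite ?one_c ?zero_c; simpc; rewrite /= => h1 h2.
nra.
Qed.
Lemma f2_D2 (R : rcfType) (U : 'M[R[i]]_2) :
  U *m U ^t* = 1%:M -> U ^t* *m U = 1%:M -> f2 (D U k2) = 2 * (sq (V1 U) + sq (V2 U)).
Proof.
move=> HU HU'; have [h1 h2] := unit_entries HU.
rewrite f2_D // /V1 /V2.
move: h1 h2; rewrite /sq /mxtrace !(mxE, sum2) /= !conjCE.
move: (U o0 o0) (U o0 o1) (U o1 o0) (U o1 o1) => [a1 b1] [a2 b2] [a3 b3] [a4 b4].
rewrite ?one_c ?zero_c; simpc; rewrite /= => h1 h2.
nra.
Qed.

Lemma sumV_le (R : rcfType) (U : 'M[R[i]]_2) :
  U *m U ^t* = 1%:M -> sq (V1 U) + sq (V2 U) + sq (V3 U) <= 4.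
Proof.
move=> HU; have [h1 h2] := unit_entries HU.
move: h1 h2; rewrite /sq /V1 /V2 /V3.
move: (U o0 o0) (U o0 o1) (U o1 o0) (U o1 o1) => [a1 b1] [a2 b2] [a3 b3] [a4 b4].
simpc; rewrite /= => h1 h2.
have := sqr_ge0 (a1 + a4); have := sqr_ge0 (b1 + b4).
nra.
Qed.
Lemma sq_ge0 (R : rcfType) (z : R[i]) : 0 <= sq z.
Proof. case: z => a b; rewrite /sq; simpc; rewrite /=; nra. Qed.
Lemma sqM (R : rcfType) (k : R) (z : R[i]) : sq ((k%:C)%C * z) = k ^+ 2 * sq z.
Proof. case: z => a b; rewrite /sq; simpc; rewrite /=; ring. Qed.

Lemma herm_real (R : rcfType) (z : R[i]) : z^*%R = z -> ((complex.Re z)%:C)%C = z.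
Proof.
rewrite conjCE; case: z => a b /= H.
have : b = - b by case: H.
move=> hb; have -> : b = 0 by lra.
by [].
Qed.
Lemma T_real (R : rcfType) (P : 'M[R[i]]_2) k : P ^t* = P -> ((complex.Re (T k P))%:C)%C = T k P.
Proof.
move=> H; apply: herm_real.
have E : forall x y, P x y = (P y x)^*%R by move=> x y; rewrite -{1}H !mxE.
have PC : forall b b', (pauli R k b b')^*%R = pauli R k b' b.
  by move=> b b'; rewrite [pauli R k b' b]pauli_herm.
rewrite !Texp !rmorphD !rmorphM /= !PC -!E; ring.
Qed.
Lemma comm_rel (R : rcfType) (P U : 'M[R[i]]_2) : P ^t* = P -> U *m P = P *m U ->
  let x := complex.Re (T k0 P) in let y := complex.Re (T k1 P) in
  let z := complex.Re (T k2 P) in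
  [/\ x ^+ 2 * sq (V2 U) = y ^+ 2 * sq (V1 U),
      x ^+ 2 * sq (V3 U) = z ^+ 2 * sq (V1 U) &
      y ^+ 2 * sq (V3 U) = z ^+ 2 * sq (V2 U)].
Proof.
move=> H C x y z.
have hx := T_real k0 H; have hy := T_real k1 H; have hz := T_real k2 H.
have E := fun i j => congr1 (fun M : 'M[R[i]]_2 => M i j) C.
have E00 := E o0 o0; have E01 := E o0 o1; have E10 := E o1 o0.
move: E00 E01 E10; rewrite !(mxE, sum2) => E00 E01 E10.
rewrite -!sqM /x /y /z hx hy hz !Texp !mxE /= /V1 /V2 /V3.
split; congr sq.
- apply/eqP; rewrite -subr_eq0; apply/eqP.
  transitivity (2 * 'i%C * ((U o0 o0 * P o0 o0 + U o0 o1 * P o1 o0) - (P o0 o0 * U o0 o0 + P o0 o1 * U o1 o0))); first by ring.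
  by rewrite E00 subrr mulr0.
- apply/eqP; rewrite -subr_eq0; apply/eqP.
  transitivity (((U o0 o0 * P o0 o1 + U o0 o1 * P o1 o1) - (P o0 o0 * U o0 o1 + P o0 o1 * U o1 o1))
     - ((U o1 o0 * P o0 o0 + U o1 o1 * P o1 o0) - (P o1 o0 * U o0 o0 + P o1 o1 * U o1 o0))); first by ring.
  by rewrite E01 E10 !subrr ?subr0.
- apply/eqP; rewrite -subr_eq0; apply/eqP.
  transitivity ('i%C * (((U o1 o0 * P o0 o0 + U o1 o1 * P o1 o0) - (P o1 o0 * U o0 o0 + P o1 o1 * U o1 o0))
     + ((U o0 o0 * P o0 o1 + U o0 o1 * P o1 o1) - (P o0 o0 * U o0 o1 + P o0 o1 * U o1 o1)))); first by ring.
  by rewrite E01 E10 !subrr ?addr0 ?mulr0.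
Qed.

Lemma f2_2 (R : rcfType) m n (M : 'M[R[i]]_(m, n)) : f2 (M *+ 2) = 4 * f2 M.
Proof.
rewrite /f2 mulr_sumr; apply: eq_bigr => i _; rewrite mulr_sumr; apply: eq_bigr => j _.
rewrite mulr2n mxE; case: (M i j) => a b; simpc; rewrite /=; ring.
Qed.
Lemma f2_scale (R : rcfType) m n (c : R) (M : 'M[R[i]]_(m, n)) : f2 ((c%:C)%C *: M) = c ^+ 2 * f2 M.
Proof.
rewrite /f2 mulr_sumr; apply: eq_bigr => i _; rewrite mulr_sumr; apply: eq_bigr => j _.
rewrite mxE; case: (M i j) => a b; simpc; rewrite /=; ring.
Qed.
Lemma f2_opp (R : rcfType) m n (M : 'M[R[i]]_(m, n)) : f2 (- M) = f2 M.
Proof.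
rewrite /f2; apply: eq_bigr => i _; apply: eq_bigr => j _.
rewrite mxE; case: (M i j) => a b; simpc; rewrite /=; ring.
Qed.
Lemma f2_par (R : rcfType) m n (X Y : 'M[R[i]]_(m, n)) :
  f2 (X - 'i%C *: Y) + f2 (X + 'i%C *: Y) = 2 * f2 X + 2 * f2 Y.
Proof.
rewrite /f2 -big_split !mulr_sumr -big_split; apply: eq_bigr => i _.
rewrite -big_split !mulr_sumr -big_split; apply: eq_bigr => j _.
rewrite !mxE; case: (X i j) => a b; case: (Y i j) => c d; simpc; rewrite /=; ring.
Qed.
Lemma twice_t (R : rcfType) (t : R[i]) :
  t *+ 2 = ((complex.Re (t^*%R + t))%:C)%C - 'i%C * ((complex.Re (- 'i%C * t^*%R + 'i%C * t))%:C)%C.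
Proof. rewrite conjCE; case: t => a b; rewrite mulr2n; simpc; rewrite /=; apply/eqP; rewrite eq_complex /=; apply/andP; split; apply/eqP; ring. Qed.
Lemma twice_tc (R : rcfType) (t : R[i]) :
  t^*%R *+ 2 = ((complex.Re (t^*%R + t))%:C)%C + 'i%C * ((complex.Re (- 'i%C * t^*%R + 'i%C * t))%:C)%C.
Proof. rewrite conjCE; case: t => a b; rewrite mulr2n; simpc; rewrite /=; apply/eqP; rewrite eq_complex /=; apply/andP; split; apply/eqP; ring. Qed.
Lemma real_eq (R : rcfType) (a b : R[i]) : a^*%R = a -> b^*%R = b -> complex.Re (a - b) = 0 -> a = b.
Proof.
move=> ha hb h; rewrite -(herm_real ha) -(herm_real hb).
by move: h; rewrite ReB => /eqP; rewrite subr_eq0 => /eqP ->.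
Qed.
Lemma real_diff (R : rcfType) (a b : R[i]) : a^*%R = a -> b^*%R = b -> a - b = ((complex.Re (a - b))%:C)%C.
Proof. by move=> ha hb; rewrite ReB rmorphB /= (herm_real ha) (herm_real hb). Qed.

Lemma blkB (R : rcfType) (A B : 'M[R[i]]_(2 * 2)) a a' : blk (A - B) a a' = blk A a a' - blk B a a'.
Proof. by apply/matrixP => b b'; rewrite !mxE. Qed.
Lemma T_add (R : rcfType) k (A B : 'M[R[i]]_2) : T k (A + B) = T k A + T k B.
Proof. by rewrite /T mulmxDr mxtraceD. Qed.
Definition MM (R : rcfType) (U X : 'M[R[i]]_2) :=
  T k0 X *: D U k0 + T k1 X *: D U k1 + T k2 X *: D U k2.
Lemma assemble (R : rcfType) (M00 M01 M10 D0 D1 D2 : 'M[R[i]]_2) (l0 l1 l2 s1 s2 s3 : R) :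
  M00 *+ 2 = ((l2%:C)%C) *: D2 ->
  M01 *+ 2 = ((l0%:C)%C) *: D0 - 'i%C *: (((l1%:C)%C) *: D1) ->
  M10 *+ 2 = ((l0%:C)%C) *: D0 + 'i%C *: (((l1%:C)%C) *: D1) ->
  f2 D0 = 2 * (s2 + s3) -> f2 D1 = 2 * (s1 + s3) -> f2 D2 = 2 * (s1 + s2) ->
  f2 M00 + f2 M01 + f2 M10 + f2 M00 =
    l0 ^+ 2 * (s2 + s3) + l1 ^+ 2 * (s1 + s3) + l2 ^+ 2 * (s1 + s2).
Proof.
move=> h0 h1 h2 g0 g1 g2.
have F00 : 4 * f2 M00 = l2 ^+ 2 * f2 D2 by rewrite -f2_2 h0 f2_scale.
have F01 : 4 * (f2 M01 + f2 M10) = 2 * (l0 ^+ 2 * f2 D0) + 2 * (l1 ^+ 2 * f2 D1).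
  by rewrite mulrDr -!f2_2 h1 h2 f2_par !f2_scale.
move: F00 F01; rewrite g0 g1 g2.
move: (f2 M00) (f2 M01) (f2 M10) => A B C F00 F01.
apply: (@mulfI _ 4); first by rewrite pnatr_eq0.
have -> : 4 * (A + B + C + A) = 2 * (4 * A) + 4 * (B + C) by ring.
rewrite F00 F01; ring.
Qed.
Lemma core (R : rcfType) (rho : 'M[R[i]]_(2 * 2)) (U : 'M[R[i]]_2) :
  rho ^t* = rho ->
  (forall i j : 'I_3, i != j -> corr rho i j = 0) ->
  U *m U ^t* = 1%:M ->
  ptraceA rho *m U = U *m ptraceA rho ->
  f2 (rho - rho_f rho U) * 4 =
    corr rho k0 k0 ^+ 2 * (sq (V2 U) + sq (V3 U))
  + corr rho k1 k1 ^+ 2 * (sq (V1 U) + sq (V3 U))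
  + corr rho k2 k2 ^+ 2 * (sq (V1 U) + sq (V2 U)).
Proof.
move=> Hh Hc HU HC.
have HU' : U ^t* *m U = 1%:M.
  have Hu : U \is unitarymx by apply/unitarymxP.
  by have := @mulmxKtV _ _ _ _ (1%:M : 'M[R[i]]_2) U Hu erefl; rewrite mul1mx.
have hermT := fun k a a' => @T_herm R rho k a a' Hh.
have c0 : forall j, corr rho k0 j = complex.Re ((T j (blk rho o0 o1))^*%R + T j (blk rho o0 o1)).
  by move=> j; rewrite corr_blk !mxE /= (hermT j o0 o1); congr complex.Re; ring.
have c1 : forall j, corr rho k1 j = complex.Re (- 'i%C * (T j (blk rho o0 o1))^*%R + 'i%C * T j (blk rho o0 o1)).
  by move=> j; rewrite corr_blk !mxE /= (hermT j o0 o1); congr complex.Re; ring.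
have c2 : forall j, corr rho k2 j = complex.Re (T j (blk rho o0 o0) - T j (blk rho o1 o1)).
  by move=> j; rewrite corr_blk !mxE /=; congr complex.Re; ring.
have r0 : forall j, (T j (blk rho o0 o0))^*%R = T j (blk rho o0 o0) by move=> j; rewrite -hermT.
have r1 : forall j, (T j (blk rho o1 o1))^*%R = T j (blk rho o1 o1) by move=> j; rewrite -hermT.
have B4 : forall a a', f2 (blk (rho - rho_f rho U) a a') * 4 = f2 (MM U (blk rho a a')).
  by move=> a a'; rewrite blkB blk_rhof mulrC -f2_2 exp_id.
have Z : MM U (blk rho o0 o0) + MM U (blk rho o1 o1) = 0.
  have : MM U (ptraceA rho) = 0.
    rewrite /MM -exp_id //.
    have -> : U *m ptraceA rho *m U ^t* = ptraceA rho by rewrite -HC -mulmxA HU mulmx1.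
    by rewrite subrr mul0rn.
  rewrite ptraceA_blk /MM !T_add => <-.
  rewrite !scalerDl; move: (D U k0) (D U k1) (D U k2) => D0 D1 D2.
  by apply/matrixP => i j; rewrite !mxE; ring.
have e0 : T k0 (blk rho o0 o0) = T k0 (blk rho o1 o1).
  by apply: real_eq => //; rewrite -c2 Hc.
have e1 : T k1 (blk rho o0 o0) = T k1 (blk rho o1 o1).
  by apply: real_eq => //; rewrite -c2 Hc.
have e2 : T k2 (blk rho o0 o0) = T k2 (blk rho o1 o1) + ((corr rho k2 k2)%:C)%C.
  by rewrite c2 -real_diff; [ring | exact: r0 | exact: r1].
have M11 : MM U (blk rho o1 o1) = - MM U (blk rho o0 o0).
  by apply/eqP; rewrite -addr_eq0 addrC Z.
have M00 : (MM U (blk rho o0 o0)) *+ 2 = ((corr rho k2 k2)%:C)%C *: D U k2.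
  have -> : MM U (blk rho o0 o0) *+ 2 = MM U (blk rho o0 o0) - MM U (blk rho o1 o1).
    by rewrite M11 opprK mulr2n.
  rewrite /MM; move: (D U k0) (D U k1) (D U k2) => D0 D1 D2.
  rewrite e0 e1 e2.
  by apply/matrixP => i j; rewrite !mxE; ring.
have t0 : T k0 (blk rho o0 o1) *+ 2 = ((corr rho k0 k0)%:C)%C.
  by rewrite twice_t -c0 -c1 (Hc k1 k0) // rmorph0 mulr0 subr0.
have t1 : T k1 (blk rho o0 o1) *+ 2 = - 'i%C * ((corr rho k1 k1)%:C)%C.
  by rewrite twice_t -c0 -c1 (Hc k0 k1) // rmorph0 sub0r mulNr.
have t2 : T k2 (blk rho o0 o1) *+ 2 = 0.
  by rewrite twice_t -c0 -c1 (Hc k0 k2) // (Hc k1 k2) // rmorph0 mulr0 subr0.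
have u0 : (T k0 (blk rho o0 o1))^*%R *+ 2 = ((corr rho k0 k0)%:C)%C.
  by rewrite twice_tc -c0 -c1 (Hc k1 k0) // rmorph0 mulr0 addr0.
have u1 : (T k1 (blk rho o0 o1))^*%R *+ 2 = 'i%C * ((corr rho k1 k1)%:C)%C.
  by rewrite twice_tc -c0 -c1 (Hc k0 k1) // rmorph0 add0r.
have u2 : (T k2 (blk rho o0 o1))^*%R *+ 2 = 0.
  by rewrite twice_tc -c0 -c1 (Hc k0 k2) // (Hc k1 k2) // rmorph0 mulr0 addr0.
have M01 : MM U (blk rho o0 o1) *+ 2 = ((corr rho k0 k0)%:C)%C *: D U k0 - 'i%C *: (((corr rho k1 k1)%:C)%C *: D U k1).
  rewrite /MM; move: (D U k0) (D U k1) (D U k2) => D0 D1 D2.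
  move: t0 t1 t2; rewrite !mulr2n.
  move: (T k0 (blk rho o0 o1)) (T k1 (blk rho o0 o1)) (T k2 (blk rho o0 o1)) => a b c t0 t1 t2.
  apply/matrixP => i j; rewrite !mxE.
  transitivity ((a + a) * D0 i j + (b + b) * D1 i j + (c + c) * D2 i j); first by ring.
  by rewrite t0 t1 t2; ring.
have M10 : MM U (blk rho o1 o0) *+ 2 = ((corr rho k0 k0)%:C)%C *: D U k0 + 'i%C *: (((corr rho k1 k1)%:C)%C *: D U k1).
  rewrite /MM (hermT k0 o0 o1) (hermT k1 o0 o1) (hermT k2 o0 o1); move: (D U k0) (D U k1) (D U k2) => D0 D1 D2.
  move: u0 u1 u2; rewrite !mulr2n.
  move: ((T k0 (blk rho o0 o1))^*%R) ((T k1 (blk rho o0 o1))^*%R) ((T k2 (blk rho o0 o1))^*%R) => a b c w0 w1 w2.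
  apply/matrixP => i j; rewrite !mxE.
  transitivity ((a + a) * D0 i j + (b + b) * D1 i j + (c + c) * D2 i j); first by ring.
  by rewrite w0 w1 w2; ring.
rewrite f2_blk !mulrDl !B4 M11 f2_opp.
exact: (assemble M00 M01 M10 (f2_D0 HU HU') (f2_D1 HU HU') (f2_D2 HU HU')).
Qed.

Lemma final_ub1 (R : rcfType) (l0 l1 l2 r0 r1 r2 s1 s2 s3 F : R) :
  0 < r0 ^+ 2 + r1 ^+ 2 + r2 ^+ 2 -> 0 <= s1 -> 0 <= s2 -> 0 <= s3 -> s1 + s2 + s3 <= 4 ->
  r0 ^+ 2 * s2 = r1 ^+ 2 * s1 -> r0 ^+ 2 * s3 = r2 ^+ 2 * s1 -> r1 ^+ 2 * s3 = r2 ^+ 2 * s2 ->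
  F * 4 = l0 ^+ 2 * (s2 + s3) + l1 ^+ 2 * (s1 + s3) + l2 ^+ 2 * (s1 + s2) ->
  F <= l0 ^+ 2 * (1 - (r0 / Num.sqrt (r0 ^+ 2 + r1 ^+ 2 + r2 ^+ 2)) ^+ 2)
     + l1 ^+ 2 * (1 - (r1 / Num.sqrt (r0 ^+ 2 + r1 ^+ 2 + r2 ^+ 2)) ^+ 2)
     + l2 ^+ 2 * (1 - (r2 / Num.sqrt (r0 ^+ 2 + r1 ^+ 2 + r2 ^+ 2)) ^+ 2).
Proof.
set N := r0 ^+ 2 + r1 ^+ 2 + r2 ^+ 2 => HN h1 h2 h3 hS e1 e2 e3 hF.
rewrite !expr_div_n sqr_sqrtr; last exact: ltW.
have NE : N != 0 by rewrite gt_eqF.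
have a0 : 1 - r0 ^+ 2 / N = (r1 ^+ 2 + r2 ^+ 2) / N by rewrite /N; field; rewrite -/N.
have a1 : 1 - r1 ^+ 2 / N = (r0 ^+ 2 + r2 ^+ 2) / N by rewrite /N; field; rewrite -/N.
have a2 : 1 - r2 ^+ 2 / N = (r0 ^+ 2 + r1 ^+ 2) / N by rewrite /N; field; rewrite -/N.
rewrite a0 a1 a2.
have b0 : (s2 + s3) * N <= 4 * (r1 ^+ 2 + r2 ^+ 2) by rewrite /N; nra.
have b1 : (s1 + s3) * N <= 4 * (r0 ^+ 2 + r2 ^+ 2) by rewrite /N; nra.
have b2 : (s1 + s2) * N <= 4 * (r0 ^+ 2 + r1 ^+ 2) by rewrite /N; nra.
have c0 : (s2 + s3) <= 4 * ((r1 ^+ 2 + r2 ^+ 2) / N) by rewrite mulrA ler_pdivlMr.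
have c1 : (s1 + s3) <= 4 * ((r0 ^+ 2 + r2 ^+ 2) / N) by rewrite mulrA ler_pdivlMr.
have c2 : (s1 + s2) <= 4 * ((r0 ^+ 2 + r1 ^+ 2) / N) by rewrite mulrA ler_pdivlMr.
move: c0 c1 c2; set A0 := (r1 ^+ 2 + r2 ^+ 2) / N; set A1 := (r0 ^+ 2 + r2 ^+ 2) / N;
  set A2 := (r0 ^+ 2 + r1 ^+ 2) / N => c0 c1 c2.
have d0 : 0 <= l0 ^+ 2 * (4 * A0 - (s2 + s3)) by apply: mulr_ge0; rewrite ?sqr_ge0 ?subr_ge0.
have d1 : 0 <= l1 ^+ 2 * (4 * A1 - (s1 + s3)) by apply: mulr_ge0; rewrite ?sqr_ge0 ?subr_ge0.
have d2 : 0 <= l2 ^+ 2 * (4 * A2 - (s1 + s2)) by apply: mulr_ge0; rewrite ?sqr_ge0 ?subr_ge0.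
nra.
Qed.
Lemma final_eq1 (R : rcfType) (l0 l1 l2 r0 r1 r2 F : R) :
  0 < r0 ^+ 2 + r1 ^+ 2 + r2 ^+ 2 ->
  F * 4 = l0 ^+ 2 * (4 * (r1 ^+ 2 + r2 ^+ 2) / (r0 ^+ 2 + r1 ^+ 2 + r2 ^+ 2))
        + l1 ^+ 2 * (4 * (r0 ^+ 2 + r2 ^+ 2) / (r0 ^+ 2 + r1 ^+ 2 + r2 ^+ 2))
        + l2 ^+ 2 * (4 * (r0 ^+ 2 + r1 ^+ 2) / (r0 ^+ 2 + r1 ^+ 2 + r2 ^+ 2)) ->
  F = l0 ^+ 2 * (1 - (r0 / Num.sqrt (r0 ^+ 2 + r1 ^+ 2 + r2 ^+ 2)) ^+ 2)
     + l1 ^+ 2 * (1 - (r1 / Num.sqrt (r0 ^+ 2 + r1 ^+ 2 + r2 ^+ 2)) ^+ 2)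
     + l2 ^+ 2 * (1 - (r2 / Num.sqrt (r0 ^+ 2 + r1 ^+ 2 + r2 ^+ 2)) ^+ 2).
Proof.
set N := r0 ^+ 2 + r1 ^+ 2 + r2 ^+ 2 => HN hF.
rewrite !expr_div_n sqr_sqrtr; last exact: ltW.
have NE : N != 0 by rewrite gt_eqF.
have -> : F = (F * 4) / 4 by field.
rewrite hF /N; field; rewrite -/N //.
Qed.
Lemma final_ub2 (R : rcfType) (l0 l1 l2 s1 s2 s3 F : R) :
  0 <= s1 -> 0 <= s2 -> 0 <= s3 -> s1 + s2 + s3 <= 4 ->
  l0 ^+ 2 <= l1 ^+ 2 -> l0 ^+ 2 <= l2 ^+ 2 ->
  F * 4 = l0 ^+ 2 * (s2 + s3) + l1 ^+ 2 * (s1 + s3) + l2 ^+ 2 * (s1 + s2) ->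
  F <= l1 ^+ 2 + l2 ^+ 2.
Proof.
move=> h1 h2 h3 hS m1 m2 hF.
have p2 : 0 <= s2 * (l1 ^+ 2 - l0 ^+ 2) by apply: mulr_ge0; rewrite // subr_ge0.
have p3 : 0 <= s3 * (l2 ^+ 2 - l0 ^+ 2) by apply: mulr_ge0; rewrite // subr_ge0.
have q : 0 <= (4 - (s1 + s2 + s3)) * (l1 ^+ 2 + l2 ^+ 2)
  by apply: mulr_ge0; rewrite ?subr_ge0 // addr_ge0 // sqr_ge0.
nra.
Qed.

Lemma ptraceA_herm (R : rcfType) (rho : 'M[R[i]]_(2 * 2)) :
  rho ^t* = rho -> (ptraceA rho) ^t* = ptraceA rho.
Proof.
move=> H; have E : forall x y, rho x y = (rho y x)^*%R by move=> x y; rewrite -{1}H !mxE.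
by apply/matrixP => b b'; rewrite !(mxE, sum2) rmorphD /= -!E.
Qed.
Lemma trP (R : rcfType) (rho : 'M[R[i]]_(2 * 2)) : \tr rho = 1 -> \tr (ptraceA rho) = 1.
Proof. by move=> H; rewrite ptraceA_blk mxtraceD -tr_blk. Qed.
Definition NN (R : rcfType) (a b c : R) : 'M[R[i]]_2 :=
  ((a%:C)%C *: pauli R k0 + (b%:C)%C *: pauli R k1 + (c%:C)%C *: pauli R k2).
Lemma Nexp (R : rcfType) (P : 'M[R[i]]_2) : P ^t* = P -> \tr P = 1 ->
  P *+ 2 - 1%:M = NN (complex.Re (T k0 P)) (complex.Re (T k1 P)) (complex.Re (T k2 P)).
Proof.
move=> H1 H2; rewrite pexp H2 scale1r /NN !T_real //.
move: (T k0 P) (T k1 P) (T k2 P) (pauli R k0) (pauli R k1) (pauli R k2) => a b c X Y Z.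
by apply/matrixP => i j; rewrite !mxE; ring.
Qed.
Lemma rC (R : rcfType) (r : R) : (r%:C)%C = (r +i* 0)%C. Proof. by []. Qed.
Lemma NN_unit (R : rcfType) (c a b d : R) : c ^+ 2 * (a ^+ 2 + b ^+ 2 + d ^+ 2) = 1 ->
  ((c%:C)%C *: NN a b d) *m ((c%:C)%C *: NN a b d) ^t* = 1%:M.
Proof.
move=> H; apply/matrixP => i j; case: (ord2P i) => ->; case: (ord2P j) => ->;
rewrite /NN !(mxE, sum2) /= ?mulr1n ?mulr0n !conjCE ?rC ?one_c ?zero_c; simpc.
all: apply/eqP; rewrite eq_complex /=; apply/andP; split; apply/eqP; nra.
Qed.
Lemma NN_V (R : rcfType) (c a b d : R) :
  [/\ sq (V1 ((c%:C)%C *: NN a b d)) = 4 * (c ^+ 2 * a ^+ 2),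
      sq (V2 ((c%:C)%C *: NN a b d)) = 4 * (c ^+ 2 * b ^+ 2) &
      sq (V3 ((c%:C)%C *: NN a b d)) = 4 * (c ^+ 2 * d ^+ 2)].
Proof.
rewrite /sq /V1 /V2 /V3 /NN !(mxE, sum2) /= ?rC ?one_c ?zero_c; simpc.
by split; rewrite /=; ring.
Qed.
Lemma pauli_unit (R : rcfType) k : pauli R k *m (pauli R k) ^t* = 1%:M.
Proof.
rewrite pauli_adj; apply/matrixP => i j.
case: (ord3P k) => ->; case: (ord2P i) => ->; case: (ord2P j) => ->;
rewrite !(mxE, sum2) /= ?mulr1n ?mulr0n ?iiE ?mulr0 ?mul0r ?addr0 ?add0r ?mulr1 ?mulrNN ?mulNr ?mulrN ?iiE ?opprK //.
all: exact: mulr1.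
Qed.
Lemma pauli_V (R : rcfType) :
  [/\ [/\ sq (V1 (pauli R k0)) = 4, sq (V2 (pauli R k0)) = 0 & sq (V3 (pauli R k0)) = 0],
      [/\ sq (V1 (pauli R k1)) = 0, sq (V2 (pauli R k1)) = 4 & sq (V3 (pauli R k1)) = 0] &
      [/\ sq (V1 (pauli R k2)) = 0, sq (V2 (pauli R k2)) = 0 & sq (V3 (pauli R k2)) = 4]].
Proof.
rewrite /sq /V1 /V2 /V3 !mxE /= ?one_c ?zero_c; simpc.
by split; split; rewrite /=; ring.
Qed.
Lemma comm_poly (R : rcfType) (Q : 'M[R[i]]_2) (c : R[i]) :
  Q *m (c *: (Q *+ 2 - 1%:M)) = (c *: (Q *+ 2 - 1%:M)) *m Q.
Proof.
apply/matrixP => i j; case: (ord2P i) => ->; case: (ord2P j) => ->;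
rewrite !(mxE, sum2) /= ?mulr1n ?mulr0n; ring.
Qed.
Lemma sq_abs (R : rcfType) (a b : R) : `|a| <= `|b| -> a ^+ 2 <= b ^+ 2.
Proof.
move=> h; rewrite -(real_normK (num_real a)) -(real_normK (num_real b)).
have := normr_ge0 a; nra.
Qed.


Unset Implicit Arguments.
Local Close Scope sesquilinear_scope.

Theorem lemma3 (R : realType) (rho : 'M[R[i]]_(2 * 2)) :
  is_state rho ->
  (forall i j : 'I_3, i != j -> corr rho i j = 0) ->
  (ptraceA rho != (2%:R^-1)%:M ->
     is_dmax rho (dmax_formula rho (fun j => blochB rho j / blochB_norm rho))) /\
  (ptraceA rho = (2%:R^-1)%:M ->
     forall i0 : 'I_3, (forall k : 'I_3, `|corr rho i0 i0| <= `|corr rho k k|) ->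
     is_dmax rho (dmax_formula rho (fun j => if j == i0 then 1 else 0))).
Proof.
move=> [Hh _ Htr] Hc.
have HP := ptraceA_herm Hh.
have HtrP := trP Htr.
have Ne : ptraceA rho *+ 2 - 1%:M = NN (blochB rho k0) (blochB rho k1) (blochB rho k2) := Nexp HP HtrP.
have core' : forall U, cyclic_unitary rho U ->
    f2 (rho - rho_f rho U) * 4 =
    corr rho k0 k0 ^+ 2 * (sq (V2 U) + sq (V3 U))
  + corr rho k1 k1 ^+ 2 * (sq (V1 U) + sq (V3 U))
  + corr rho k2 k2 ^+ 2 * (sq (V1 U) + sq (V2 U)).
  by move=> U [/unitarymxP HU HC]; rewrite core.
have fuE : forall U, fu_dist rho U = (Num.sqrt 2)^-1 * Num.sqrt (f2 (rho - rho_f rho U)) by [].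
have sqrt2 : 0 <= (Num.sqrt (2 : R))^-1 by rewrite invr_ge0 sqrtr_ge0.
split.
- move=> Hneq.
  have NE : blochB_norm rho = Num.sqrt (blochB rho k0 ^+ 2 + blochB rho k1 ^+ 2 + blochB rho k2 ^+ 2)
    by rewrite /blochB_norm sum3.
  rewrite /dmax_formula NE sum3.
  have Npos : 0 < blochB rho k0 ^+ 2 + blochB rho k1 ^+ 2 + blochB rho k2 ^+ 2.
    move: Ne Hneq.
    move: (blochB rho k0) (blochB rho k1) (blochB rho k2) => r0 r1 r2 Ne Hneq.
    rewrite lt_def; apply/andP; split; last by rewrite !addr_ge0 ?sqr_ge0.
    apply/negP => /eqP N0.
    have g0 := sqr_ge0 r0; have g1 := sqr_ge0 r1; have g2 := sqr_ge0 r2.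
    have z0 : r0 = 0 by apply/eqP; rewrite -sqrf_eq0; apply/eqP; nra.
    have z1 : r1 = 0 by apply/eqP; rewrite -sqrf_eq0; apply/eqP; nra.
    have z2 : r2 = 0 by apply/eqP; rewrite -sqrf_eq0; apply/eqP; nra.
    move: Ne; rewrite z0 z1 z2 /NN rmorph0 !scale0r !addr0.
    move/eqP; rewrite subr_eq0 => /eqP E2.
    move/negP: Hneq; apply; apply/eqP.
    have -> : ptraceA rho = (2%:R^-1 : R[i]) *: (ptraceA rho *+ 2).
      by rewrite -(scaler_nat 2 (ptraceA rho)) scalerA mulVf ?scale1r // pnatr_eq0.
    by rewrite E2 scale_scalar_mx mulr1.
  move: Ne Npos.
  have cr : forall U, U *m ptraceA rho = ptraceA rho *m U ->
    [/\ blochB rho k0 ^+ 2 * sq (V2 U) = blochB rho k1 ^+ 2 * sq (V1 U),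
        blochB rho k0 ^+ 2 * sq (V3 U) = blochB rho k2 ^+ 2 * sq (V1 U) &
        blochB rho k1 ^+ 2 * sq (V3 U) = blochB rho k2 ^+ 2 * sq (V2 U)]
    := fun U H => comm_rel HP H.
  move: (blochB rho k0) (blochB rho k1) (blochB rho k2) cr => r0 r1 r2 cr Ne Npos.
  set N := r0 ^+ 2 + r1 ^+ 2 + r2 ^+ 2.
  set c := (Num.sqrt N)^-1.
  have cN : c ^+ 2 * N = 1 by rewrite /c exprVn sqr_sqrtr ?ltW // mulVf // gt_eqF.
  have Hcyc : cyclic_unitary rho ((c%:C)%C *: NN r0 r1 r2).
    split; first by apply/unitarymxP; apply: NN_unit; rewrite cN.
    rewrite -Ne; apply: comm_poly.
  split.
  + exists ((c%:C)%C *: NN r0 r1 r2); split => //.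
    have := core' _ Hcyc; have [-> -> ->] := NN_V c r0 r1 r2 => H.
    rewrite fuE; congr (_ * Num.sqrt _); apply: final_eq1 => //.
    rewrite H.
    have c2 : c ^+ 2 = N^-1 by rewrite /c exprVn sqr_sqrtr // ltW.
    rewrite c2 /N; field; rewrite -/N gt_eqF //.
  + move=> U HU; rewrite fuE; apply: ler_wpM2l => //; apply: ler_wsqrtr.
    have [/unitarymxP HUu HC] := HU.
    have [e1 e2 e3] := cr U (esym HC).
    exact: (final_ub1 Npos (sq_ge0 _) (sq_ge0 _) (sq_ge0 _) (sumV_le HUu) e1 e2 e3 (core' U HU)).
- move=> HI i0 Hmin.
  have m1 := fun k => sq_abs (Hmin k).
  have Hcyc : cyclic_unitary rho (pauli R i0).
    split; first by apply/unitarymxP; apply: pauli_unit.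
    by rewrite HI scalar_mxC.
  rewrite /dmax_formula sum3.
  have [[a1 a2 a3] [b1 b2 b3] [d1 d2 d3]] := pauli_V R.
  split.
  + exists (pauli R i0); split => //.
    have := core' _ Hcyc; rewrite fuE => H; congr (_ * Num.sqrt _).
    case: (ord3P i0) H => -> H; rewrite /= ?eqxx; move: H; rewrite ?a1 ?a2 ?a3 ?b1 ?b2 ?b3 ?d1 ?d2 ?d3;
    move: (f2 _) (corr rho k0 k0) (corr rho k1 k1) (corr rho k2 k2) => F l0 l1 l2 H; nra.
  + move=> U HU; rewrite fuE; apply: ler_wpM2l => //; apply: ler_wsqrtr.
    have [/unitarymxP HUu HC] := HU.
    have := core' U HU; have := sumV_le HUu; have := sq_ge0 (V1 U); have := sq_ge0 (V2 U); have := sq_ge0 (V3 U).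
    move: (sq (V1 U)) (sq (V2 U)) (sq (V3 U)) (f2 (rho - rho_f rho U)) => s1 s2 s3 F g3 g2 g1 hS H.
    case: (ord3P i0) m1 => -> m1 /=; have q0 := m1 k0; have q1 := m1 k1; have q2 := m1 k2; move: q0 q1 q2 H;
    move: (corr rho k0 k0) (corr rho k1 k1) (corr rho k2 k2) => l0 l1 l2 q0 q1 q2 H.
    * have := final_ub2 g1 g2 g3 hS q1 q2 H; nra.
    * have hS' : s2 + s1 + s3 <= 4 by lra.
      have H' : F * 4 = l1 ^+ 2 * (s1 + s3) + l0 ^+ 2 * (s2 + s3) + l2 ^+ 2 * (s2 + s1)
        by rewrite H; ring.
      have := final_ub2 g2 g1 g3 hS' q0 q2 H'; nra.
    * have hS' : s3 + s2 + s1 <= 4 by lra.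
      have H' : F * 4 = l2 ^+ 2 * (s2 + s1) + l1 ^+ 2 * (s3 + s1) + l0 ^+ 2 * (s3 + s2)
        by rewrite H; ring.
      have := final_ub2 g3 g2 g1 hS' q1 q0 H'; nra.
Qed.
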